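(* An integral polynomial $u(t)\in\mathbb{Z}[t]$ is equal to the polynomial $u(\alpha)$ of some virtual string $\alpha$ if and only if $u(0)=u'(1)=0$.
   Context: A virtual string $\alpha$ of rank $m\ge 0$ consists of an oriented circle $S$ (the core circle) together with $2m$ distinct points of $S$ partitioned into $m$ ordered pairs $(a,b)$, called arrows; $a$ is the tail and $b$ the head of the arrow. For distinct $a,b\in S$, $ab$ denotes the arc of $S$ going from $a$ to $b$ in the positive direction. An arrow $f=(c,d)\neq e=(a,b)$ links $e$ positively if $c\in ab$, $d\in ba$, and negatively if $c\in ba$, $d\in ab$. Let $n(e)\in\mathbb{Z}$ be the number of arrows linking $e$ positively minus the number of arrows linking $e$ negatively. For $k\ge1$ set $u_k(\alpha)=\#\{e: n(e)=k\}-\#\{e:n(e)=-k\}$ and $u(\alpha)=\sum_{k\ge1}u_k(\alpha)t^k\in\mathbb{Z}[t]$. *)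

(* Defs.v *)
From HB Require Import structures.
From mathcomp Require Import all_boot all_order all_algebra.
Set Implicit Arguments. Unset Strict Implicit. Unset Printing Implicit Defensive.
Import Order.TTheory GRing.Theory Num.Theory.

(* A virtual string of rank m is encoded as a list of m arrows (tail, head),
   whose 2m endpoints are pairwise distinct natural numbers.  The core circle
   is modelled by nat with the cyclic order induced by the usual order
   (any finite configuration of points on an oriented circle is order-
   isomorphic to such a configuration, after cutting the circle at a point
   that is not an endpoint). *)
Definition endpoints (s : seq (nat * nat)) : seq nat :=
  flatten [seq [:: e.1; e.2] | e <- s].

Definition virtual_string (s : seq (nat * nat)) : bool := uniq (endpoints s).

Definition in_arc (a b x : nat) : bool :=
  if a < b then (a < x) && (x < b) else (a < x) || (x < b).

Definition links_pos (e f : nat * nat) : bool :=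
  in_arc e.1 e.2 f.1 && in_arc e.2 e.1 f.2.
Definition links_neg (e f : nat * nat) : bool :=
  in_arc e.2 e.1 f.1 && in_arc e.1 e.2 f.2.

Local Open Scope ring_scope.

Definition nval (s : seq (nat * nat)) (i : 'I_(size s)) : int :=
  \sum_(j < size s | j != i)
     ((links_pos (nth (0,0)%N s i) (nth (0,0)%N s j))%:Z
      - (links_neg (nth (0,0)%N s i) (nth (0,0)%N s j))%:Z).

Definition u_k (s : seq (nat * nat)) (k : nat) : int :=
  (#|[set i : 'I_(size s) | nval i == k%:Z]|)%:Z
  - (#|[set i : 'I_(size s) | nval i == - k%:Z]|)%:Z.

(* u(alpha) = sum_{k >= 1} u_k t^k ; u_k = 0 for k >= rank, so the sum is
   finite and truncated at size s. *)
Definition u_poly (s : seq (nat * nat)) : {poly int} :=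
  \poly_(k < (size s).+1) (if k == 0%N then 0 else u_k s k).

(* Main.v *)
Require Import Defs.
From HB Require Import structures.
From mathcomp Require Import all_boot all_order all_algebra zify.
Import Order.TTheory GRing.Theory Num.Theory.
Local Open Scope ring_scope.

Definition lk (e f : nat * nat) : int :=
  (links_pos e f)%:Z - (links_neg e f)%:Z.
Definition nv (s : seq (nat * nat)) (e : nat * nat) : int := \sum_(f <- s) lk e f.
Definition mono (n : int) : {poly int} :=
  match n return {poly int} with Posz O => 0 | Posz (S m) => 'X^(m.+1) | Negz m => - 'X^(m.+1) end.

Lemma in_arc_l a b : in_arc a b a = false.
Proof. rewrite /in_arc; case: ltnP => ? /=; lia. Qed.
Lemma in_arc_r a b : in_arc a b b = false.
Proof. rewrite /in_arc; case: ltnP => ? /=; lia. Qed.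
Lemma lk_self e : lk e e = 0.
Proof. by rewrite /lk /links_pos /links_neg /= !in_arc_l !in_arc_r. Qed.

Lemma coef_mono n k : (mono n)`_k =
  if k == 0%N then 0 else ((n == k%:Z)%:Z - (n == - k%:Z)%:Z).
Proof.
case: n => [[|m]|m] /=; rewrite ?coef0 ?coefN ?coefXn.
- by case: k.
- case: k => [|k] //=; rewrite ?eqz_nat subr0 eq_sym; by case: eqP.
- case: k => [|k] //=; rewrite NegzE eqr_opp ?eqz_nat sub0r eq_sym; by case: eqP.
Qed.

Lemma card_sum n (P : pred 'I_n) :
  (#|[set i | P i]|)%:Z = \sum_(i < n) (P i)%:Z.
Proof.
rewrite -natz -[_%:R]/(1 *+ _) -sumr_const big_mkcond /=.
by apply: eq_bigr => i _; rewrite inE; case: (P i).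
Qed.

Lemma lk_norm e f : `|lk e f| <= 1.
Proof. by rewrite /lk; case: links_pos; case: links_neg. Qed.

Lemma nval_bound s (i : 'I_(size s)) : `|nval i| <= (size s)%:Z.
Proof.
rewrite /nval; apply: le_trans (ler_norm_sum _ _ _) _.
apply: le_trans (_ : \sum_(j < size s | j != i) (1:int) <= _).
  by apply: ler_sum => j _; apply: lk_norm.
rewrite big_mkcond /= -[X in _ <= X]natz -[_%:R]/(1 *+ _).
rewrite -[X in _ <= X%:R]card_ord -sumr_const.
by apply: ler_sum => j _; case: (j != i).
Qed.

Lemma uA s : u_poly s = \sum_(i < size s) mono (nval i).
Proof.
apply/polyP => k; rewrite coef_poly coef_sum.
under eq_bigr do rewrite coef_mono.
case: eqP => [->|k0]; first by rewrite big1.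
rewrite /u_k !card_sum -sumrB.
case: ltnP => // hk; rewrite big1 // => i _.
have := nval_bound _ i.
case: eqP => [->|_]; first by move=> h; lia.
case: eqP => [->|_]; first by move=> h; lia.
by [].
Qed.

Lemma nval_nv s (i : 'I_(size s)) : nval i = nv s (nth (0,0)%N s i).
Proof.
rewrite /nval /nv (big_nth (0,0)%N) big_mkord [RHS](bigD1 i) //= lk_self add0r.
by [].
Qed.

Lemma uA' s : u_poly s = \sum_(e <- s) mono (nv s e).
Proof.
rewrite uA [RHS](big_nth (0,0)%N) big_mkord.
by apply: eq_bigr => i _; rewrite nval_nv.
Qed.

Lemma endpoints_cons e s : endpoints (e :: s) = e.1 :: e.2 :: endpoints s.
Proof. by []. Qed.

Lemma vs_neq s e : virtual_string s -> e \in s -> e.1 != e.2.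
Proof.
elim: s => // g s IH; rewrite /virtual_string endpoints_cons /= inE.
case/andP=> /norP[ne _] /andP[_ u] /orP[/eqP->|h]; first by [].
exact: IH.
Qed.

Lemma pos_neg e f : e.1 != e.2 -> f.1 != f.2 -> links_pos e f = links_neg f e.
Proof.
case: e => a b; case: f => c d /=.
rewrite /links_pos /links_neg /in_arc /= => ab cd.
by do ![case: ltnP => ?] => /=; apply/idP/idP; lia.
Qed.

Lemma lk_anti e f : e.1 != e.2 -> f.1 != f.2 -> lk e f = - lk f e.
Proof.
move=> he hf; rewrite /lk (pos_neg _ _ he hf) (pos_neg _ _ hf he).
by rewrite opprB.
Qed.

Lemma sum_nv s : virtual_string s -> \sum_(e <- s) nv s e = 0.
Proof.
move=> vs; rewrite /nv.
have h : \sum_(e <- s) \sum_(f <- s) lk e f = - \sum_(e <- s) \sum_(f <- s) lk e f.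
  rewrite [X in _ = - X]exchange_big /= -sumrN big_seq_cond [RHS]big_seq_cond.
  apply: eq_bigr => e /andP[he _]; rewrite -sumrN big_seq_cond [RHS]big_seq_cond.
  apply: eq_bigr => f /andP[hf _]; rewrite (lk_anti _ _ (vs_neq _ _ vs he) (vs_neq _ _ vs hf)).
  by [].
by move/eqP: h; rewrite -addr_eq0 -mulr2n mulrn_eq0 => /eqP.
Qed.

Lemma mono0 n : (mono n).[0] = 0.
Proof. case: n => [[|m]|m] /=; [by rewrite horner0 | by rewrite hornerXn expr0n | by rewrite hornerN hornerXn expr0n oppr0]. Qed.

Lemma mono_d1 n : ((mono n)^`()).[1] = n.
Proof.
case: n => [[|m]|m] /=; rewrite ?deriv0 ?horner0 // ?derivN derivXn ?hornerN hornerMn hornerXn expr1n.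
  by rewrite natz.
by rewrite natz NegzE.
Qed.

Lemma dir1 s : virtual_string s -> (u_poly s).[0] = 0 /\ ((u_poly s)^`()).[1] = 0.
Proof.
move=> vs; rewrite uA' horner_sum raddf_sum horner_sum; split.
  by rewrite big1 // => e _; rewrite mono0.
under eq_bigr do rewrite mono_d1.
exact: sum_nv.
Qed.

Definition pmap2 (g : nat -> nat) (s : seq (nat * nat)) := [seq (g e.1, g e.2) | e <- s].

Lemma endpoints_map g s : endpoints (pmap2 g s) = map g (endpoints s).
Proof.
elim: s => // e s IH.
change (endpoints ((g e.1, g e.2) :: pmap2 g s) = map g (endpoints (e :: s))).
by rewrite !endpoints_cons IH.
Qed.

Lemma endpoints_cat s t : endpoints (s ++ t) = endpoints s ++ endpoints t.
Proof. by elim: s => // e s IH; rewrite cat_cons !endpoints_cons IH. Qed.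

Lemma mem_ends s e : e \in s -> (e.1 \in endpoints s) && (e.2 \in endpoints s).
Proof.
elim: s => // g s IH; rewrite inE endpoints_cons => /orP[/eqP->|h].
  by rewrite !inE !eqxx orbT.
by case/andP: (IH h) => h1 h2; rewrite !inE h1 h2 !orbT.
Qed.

Definition bnd s := foldr maxn 0%N (endpoints s).
Lemma le_bnd s x : x \in endpoints s -> (x <= bnd s)%N.
Proof.
rewrite /bnd; elim: (endpoints s) => // y l IH; rewrite inE => /orP[/eqP->|h] /=.
  exact: leq_maxl.
exact: leq_trans (IH h) (leq_maxr _ _).
Qed.

Lemma nv_map g s e : nv (pmap2 g s) (g e.1, g e.2) = \sum_(f <- s) lk (g e.1, g e.2) (g f.1, g f.2).
Proof. by rewrite /nv big_map. Qed.

Lemma u_map g s : u_poly (pmap2 g s) = \sum_(e <- s) mono (nv (pmap2 g s) (g e.1, g e.2)).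
Proof. by rewrite uA' big_map. Qed.

Lemma lk_sh N e f : lk (e.1 + N, e.2 + N)%N (f.1 + N, f.2 + N)%N = lk e f.
Proof.
have h a b x : in_arc (a + N) (b + N) (x + N) = in_arc a b x.
  by rewrite /in_arc !ltn_add2r.
by rewrite /lk /links_pos /links_neg /= !h.
Qed.

Lemma u_sh N s : u_poly (pmap2 (addn^~ N) s) = u_poly s.
Proof.
rewrite u_map uA'; apply: eq_bigr => e _; rewrite nv_map /nv.
by congr mono; apply: eq_bigr => f _; rewrite lk_sh.
Qed.

Lemma vs_sh N s : virtual_string s -> virtual_string (pmap2 (addn^~ N) s).
Proof. by rewrite /virtual_string endpoints_map map_inj_uniq //; apply: addIn. Qed.

Lemma mono_opp n : mono (- n) = - mono n.
Proof.
case: n => [[|m]|m] /=; first by rewrite oppr0.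
  by [].
by rewrite opprK. Qed.

Lemma lk_mir N e f : (e.1 <= N)%N -> (e.2 <= N)%N -> (f.1 <= N)%N -> (f.2 <= N)%N ->
  lk (N - e.1, N - e.2)%N (N - f.1, N - f.2)%N = - lk e f.
Proof.
case: e => a b; case: f => c d /= *.
have h x y z : (x <= N)%N -> (y <= N)%N -> (z <= N)%N ->
    in_arc (N - x) (N - y) (N - z) = in_arc y x z.
  rewrite /in_arc => *.
  by do ![case: ltnP => ?] => /=; apply/idP/idP; lia.
rewrite /lk /links_pos /links_neg /= !h //.
by rewrite opprB.
Qed.

Lemma u_mir s : u_poly (pmap2 (subn (bnd s)) s) = - u_poly s.
Proof.
rewrite u_map uA' -sumrN big_seq [RHS]big_seq; apply: eq_bigr => e he.
rewrite nv_map /nv -mono_opp -sumrN big_seq [in RHS]big_seq; congr mono.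
apply: eq_bigr => f hf.
case/andP: (mem_ends _ _ he) => /le_bnd h1 /le_bnd h2.
case/andP: (mem_ends _ _ hf) => /le_bnd h3 /le_bnd h4.
by rewrite lk_mir.
Qed.

Lemma vs_mir s : virtual_string s -> virtual_string (pmap2 (subn (bnd s)) s).
Proof.
rewrite /virtual_string endpoints_map => u; rewrite map_inj_in_uniq //.
move=> x y /le_bnd hx /le_bnd hy /= h; lia.
Qed.

Lemma lk_sep e f : e.1 != e.2 -> f.1 != f.2 ->
  (e.1 < f.1)%N -> (e.1 < f.2)%N -> (e.2 < f.1)%N -> (e.2 < f.2)%N ->
  lk e f = 0 /\ lk f e = 0.
Proof.
case: e => a b; case: f => c d /= *.
rewrite /lk /links_pos /links_neg /in_arc /=.
by split; do ![case: ltnP => ?] => /=; lia.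
Qed.

Definition R (p : {poly int}) := exists s, virtual_string s /\ u_poly s = p.

Lemma R0 : R 0.
Proof. exists [::]; split => //; by rewrite uA' big_nil. Qed.

Lemma RN p : R p -> R (- p).
Proof. case=> s [vs <-]; exists (pmap2 (subn (bnd s)) s); by rewrite vs_mir // u_mir. Qed.

Lemma RD p q : R p -> R q -> R (p + q).
Proof.
case=> s [vs <-] [t0 [vt0 <-]].
set N := (bnd s).+1; set t := pmap2 (addn^~ N) t0.
have vt : virtual_string t by apply: vs_sh.
have et : forall x, x \in endpoints t -> (N <= x)%N.
  by move=> x; rewrite endpoints_map => /mapP[y _ ->]; apply: leq_addl.
have es : forall x, x \in endpoints s -> (x < N)%N.
  by move=> x /le_bnd.
exists (s ++ t); split.
  rewrite /virtual_string endpoints_cat cat_uniq; apply/and3P; split => //.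
  apply/hasPn => x /et h; apply/negP => /es; lia.
rewrite -(u_sh N t0) -/t !uA' big_cat /=; congr (_ + _).
  rewrite big_seq [RHS]big_seq; apply: eq_bigr => e he; congr mono.
  rewrite /nv big_cat /= [X in _ + X = _](_ : _ = 0) ?addr0 //.
  rewrite big_seq big1 // => f hf.
  case/andP: (mem_ends _ _ he) => /es h1 /es h2.
  case/andP: (mem_ends _ _ hf) => /et h3 /et h4.
  have [] := lk_sep _ _ (vs_neq _ _ vs he) (vs_neq _ _ vt hf); try lia; by [].
rewrite big_seq [RHS]big_seq; apply: eq_bigr => e he; congr mono.
rewrite /nv big_cat /= [X in X + _ = _](_ : _ = 0) ?add0r //.
rewrite big_seq big1 // => f hf.
case/andP: (mem_ends _ _ he) => /et h1 /et h2.
case/andP: (mem_ends _ _ hf) => /es h3 /es h4.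
have [] := lk_sep _ _ (vs_neq _ _ vs hf) (vs_neq _ _ vt he); try lia; by [].
Qed.

Definition Sk (k : nat) : seq (nat * nat) :=
  (0, k.+1)%N :: [seq (i, (k.*2.+2) - i)%N | i <- iota 1 k].

Lemma ends_L M a n x : x \in flatten [seq [:: i; M - i]%N | i <- iota a n] ->
  exists2 i, (a <= i < a + n)%N & (x = i \/ x = M - i)%N.
Proof.
elim: n a => [|n IH] a //=; rewrite !inE => /orP[/eqP->|/orP[/eqP->|/IH h]].
- exists a; [lia | by left].
- exists a; [lia | by right].
- case: h => i hi hx; exists i => //; lia.
Qed.

Lemma uniq_L k a n : (1 <= a)%N -> (a + n <= k.+1)%N ->
  uniq (flatten [seq [:: i; k.*2.+2 - i]%N | i <- iota a n]).
Proof.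
elim: n a => [|n IH] a //= h1 h2.
rewrite !inE IH; try lia.
rewrite andbT; apply/andP; split.
  apply/norP; split; first by apply/eqP; lia.
  by apply/negP => /ends_L [i hi [] hx]; lia.
by apply/negP => /ends_L [i hi [] hx]; lia.
Qed.

Lemma vs_Sk k : virtual_string (Sk k).
Proof.
rewrite /virtual_string /Sk endpoints_cons.
have -> : endpoints [seq (i, (k.*2.+2 - i)%N) | i <- iota 1 k] =
   flatten [seq [:: i; k.*2.+2 - i]%N | i <- iota 1 k].
  by rewrite /endpoints -map_comp.
rewrite /= !inE uniq_L ?andbT; try lia.
apply/andP; split.
  apply/norP; split; first by [].
  by apply/negP => /ends_L [i hi [] hx]; lia.
by apply/negP => /ends_L [i hi [] hx]; lia.
Qed.

Lemma iota_idx k : iota 1 k = index_iota 1 k.+1.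
Proof. by rewrite /index_iota subSS subn0. Qed.

Lemma u_Sk k : (0 < k)%N -> u_poly (Sk k) = 'X^k - 'X *+ k.
Proof.
move=> k0.
set M := k.*2.+2.
have e0 : nv (Sk k) (0, k.+1)%N = k.
  rewrite /nv /Sk big_cons lk_self add0r big_map big_seq.
  rewrite (eq_bigr (fun _ => 1)); last first.
    move=> i; rewrite mem_iota => hi.
    rewrite /lk /links_pos /links_neg /in_arc /=.
    by do ![case: ltnP => ?]; lia.
  by rewrite -big_seq iota_idx sumr_const_nat natz subSS subn0.
have e1 : forall i, (1 <= i <= k)%N -> nv (Sk k) (i, M - i)%N = -1.
  move=> i hi.
  rewrite /nv /Sk big_cons big_map big_seq big1 ?addr0.
    rewrite /lk /links_pos /links_neg /in_arc /=.
    by do ![case: ltnP => ?]; lia.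
  move=> j; rewrite mem_iota => hj.
  rewrite /lk /links_pos /links_neg /in_arc /=.
  by do ![case: ltnP => ?]; lia.
rewrite uA' {1}/Sk big_cons e0 big_map big_seq.
rewrite (eq_bigr (fun _ => - 'X)); last first.
  by move=> i; rewrite mem_iota => hi; rewrite e1 //; lia.
rewrite -big_seq iota_idx sumr_const_nat subSS subn0.
case: k k0 {e0 e1 M} => [|k] _ //=.
by rewrite mulNrn.
Qed.

Lemma RMn q n : R q -> R (q *+ n).
Proof.
move=> h; elim: n => [|n IH]; first by rewrite mulr0n; apply: R0.
by rewrite mulrS; apply: RD.
Qed.

Lemma RZ (c : int) q : R q -> R (c *: q).
Proof.
move=> h; rewrite -[c]intz scaler_int.
case: c => n /=; first exact: RMn.
by apply: RN; apply: RMn.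
Qed.

Lemma Rsum (I : Type) (r : seq I) (P : pred I) (F : I -> {poly int}) :
  (forall k, R (F k)) -> R (\sum_(k <- r | P k) F k).
Proof.
move=> h; elim/big_rec: _ => [|i x _ hx]; first exact: R0.
exact: RD.
Qed.

Lemma dir2 p : p.[0] = 0 -> (p^`()).[1] = 0 -> R p.
Proof.
move=> h0 h1.
set n := (size p).+1.
have pdef : p = \sum_(k < n) p`_k *: 'X^k.
  rewrite -poly_def; apply/polyP => i; rewrite coef_poly.
  case: ltnP => // hi; rewrite nth_default //; exact: leq_trans (leqnSn _) hi.
have hd : \sum_(k < n) p`_k *+ k = 0.
  have hs : (size p^`() <= size p)%N.
    by case: (eqVneq p 0) => [->|/lt_size_deriv/ltnW //]; rewrite deriv0 size_poly0.
  rewrite /n big_ord_recl /= mulr0n add0r; apply: etrans _ h1.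
  rewrite (horner_coef_wide _ hs); apply: eq_bigr => i _.
  by rewrite coef_deriv expr1n mulr1.
have -> : p = \sum_(k < n) p`_k *: ('X^k - 'X *+ k).
  under eq_bigr do rewrite scalerBr.
  rewrite sumrB -pdef.
  under eq_bigr do rewrite -scalerMnr scalerMnl.
  by rewrite -scaler_suml hd scale0r subr0.
apply: Rsum => -[k hk] /=.
case: k hk => [|k] hk.
  have -> : p`_0 = 0 by rewrite -horner_coef0.
  rewrite scale0r; exact: R0.
apply: RZ.
rewrite -u_Sk //; exists (Sk k.+1); split => //; exact: vs_Sk.
Qed.

Theorem theorem3p1 (u : {poly int}) :
  (exists s : seq (nat * nat), virtual_string s /\ u_poly s = u)
  <-> (u.[0] = 0 /\ (u^`()).[1] = 0).
Proof.
split; first by case=> s [vs <-]; apply: dir1.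
by case=> h0 h1; apply: dir2.
Qed.
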